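(* Let $\mathcal{L}\subseteq\mathcal{L}_c$ be a class of latency functions and consider a parallel-link network with $n=2$ links, unit demand and $\ell_1,\ell_2\in\mathcal{L}$. Let $x^*$ be an optimal flow. If there is $i\in\{1,2\}$ with $x_i(0)>x^*_i$ and $x_i(0)\le\frac12$, then $$C(x(0))\le \frac{1}{1-\mu_1(\mathcal{L})/2}\,C(x^* ).$$
   Context: $\mathcal{L}_c$: strictly increasing, convex, continuously differentiable functions $\mathbb{R}_+\to\mathbb{R}_+$. Flows $x\in\mathbb{R}^2_+$ with $x_1+x_2=1$; $C(x)=\sum_i\ell_i(x_i)x_i$; $x^*$ minimizes $C$ over flows. $x(0)$ is the (untolled) Wardrop equilibrium: for all $i,j$ with $x_i>0$, $\ell_i(x_i)\le\ell_j(x_j)$. For $\ell\in\mathcal{L}$ define $\mu_1(\ell)=\sup_{x,x^*\ge0}\frac{(\ell(x)-\ell(x^* ))\,x^*}{\ell(x)\,x}$, and $\mu_1(\mathcal{L})=\sup_{\ell\in\mathcal{L}}\mu_1(\ell)$ (which lies in $[0,1]$). *)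

(* Defs.v *)
From Stdlib Require Import Reals Lra.
Open Scope R_scope.

Definition Rplus_dom (y : R) : Prop := 0 <= y.

(* Continuously differentiable on R_+ (one-sided at 0): there is a
   derivative l' on (0,oo), l' extends continuously to [0,oo), and l is
   continuous on [0,oo) (relative to the domain [0,oo)). *)
Definition C1_on_Rplus (l : R -> R) : Prop :=
  exists l' : R -> R,
    (forall x, 0 < x -> derivable_pt_lim l x (l' x)) /\
    (forall x, 0 <= x -> limit1_in l' Rplus_dom (l' x) x) /\
    (forall x, 0 <= x -> limit1_in l Rplus_dom (l x) x).

Definition in_Lc (l : R -> R) : Prop :=
  (forall x, 0 <= x -> 0 <= l x) /\
  (forall x y, 0 <= x -> x < y -> l x < l y) /\
  (forall x y t, 0 <= x -> 0 <= y -> 0 <= t <= 1 ->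
     l (t * x + (1 - t) * y) <= t * l x + (1 - t) * l y) /\
  C1_on_Rplus l.

(* The set of ratios whose supremum is mu_1(l); the ratio is only defined
   when l(x) x <> 0, i.e. x > 0 (l(x) > 0 for x > 0 on L_c). *)
Definition mu1_ratios (l : R -> R) (r : R) : Prop :=
  exists x xs, 0 < x /\ 0 <= xs /\
    r = (l x - l xs) * xs / (l x * x).

Definition mu1_of (l : R -> R) (m : R) : Prop := is_lub (mu1_ratios l) m.

Definition mu1_class (L : (R -> R) -> Prop) (mu : R) : Prop :=
  is_lub (fun m => exists l, L l /\ mu1_of l m) mu.

Definition is_flow (x1 x2 : R) : Prop := 0 <= x1 /\ 0 <= x2 /\ x1 + x2 = 1.

Definition cost (l1 l2 : R -> R) (x1 x2 : R) : R := l1 x1 * x1 + l2 x2 * x2.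

Definition is_optimal (l1 l2 : R -> R) (x1 x2 : R) : Prop :=
  is_flow x1 x2 /\
  forall y1 y2, is_flow y1 y2 -> cost l1 l2 x1 x2 <= cost l1 l2 y1 y2.

Definition is_wardrop (l1 l2 : R -> R) (x1 x2 : R) : Prop :=
  is_flow x1 x2 /\
  (0 < x1 -> l1 x1 <= l2 x2) /\ (0 < x2 -> l2 x2 <= l1 x1).

(* Main.v *)
Require Import Defs.
From Stdlib Require Import Reals Lra Psatz.
Open Scope R_scope.

Lemma lpos (l : R -> R) : in_Lc l -> forall x, 0 < x -> 0 < l x.
Proof.
  intros [H0 [Hm _]] x Hx. specialize (H0 0 (Rle_refl 0)).
  specialize (Hm 0 x (Rle_refl 0) Hx). lra.
Qed.

Lemma num_le (l : R -> R) : in_Lc l -> forall x xs, 0 < x -> 0 <= xs ->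
  (l x - l xs) * xs <= l x * x.
Proof.
  intros Hl x xs Hx Hxs. pose proof (lpos l Hl x Hx) as Lp.
  destruct Hl as [H0 [Hm _]].
  destruct (Rle_lt_dec xs x) as [Hle|Hlt].
  - pose proof (H0 xs Hxs). nra.
  - pose proof (Hm x xs (Rlt_le _ _ Hx) Hlt). nra.
Qed.

Lemma ratio_le1 (l : R -> R) : in_Lc l -> forall r, mu1_ratios l r -> r <= 1.
Proof.
  intros Hl r [x [xs [Hx [Hxs ->]]]].
  pose proof (lpos l Hl x Hx). pose proof (num_le l Hl x xs Hx Hxs).
  assert (0 < l x * x) by nra.
  unfold Rdiv. apply (Rmult_le_reg_r (l x * x)); auto.
  rewrite Rmult_assoc, Rinv_l by lra. lra.
Qed.

Lemma mu1_exists (l : R -> R) : in_Lc l -> exists m, mu1_of l m.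
Proof.
  intros Hl. destruct (completeness (mu1_ratios l)) as [m Hm].
  - exists 1. intros r Hr. exact (ratio_le1 l Hl r Hr).
  - exists 0. exists 1, 0. split; [lra|split;[lra|]]. unfold Rdiv. ring.
  - exists m. exact Hm.
Qed.

Lemma mu_facts (L : (R -> R) -> Prop) (HL : forall l, L l -> in_Lc l) mu
  (Hmu : mu1_class L mu) :
  mu <= 1 /\ forall l, L l -> forall x xs, 0 < x -> 0 <= xs ->
    (l x - l xs) * xs <= mu * (l x * x).
Proof.
  split.
  - apply (proj2 Hmu). intros m [l [Hl Hm]]. apply (proj2 Hm).
    intros r Hr. exact (ratio_le1 l (HL l Hl) r Hr).
  - intros l Hl x xs Hx Hxs. destruct (mu1_exists l (HL l Hl)) as [m Hm].
    assert (Hr : (l x - l xs) * xs / (l x * x) <= mu).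
    { apply Rle_trans with m.
      - apply (proj1 Hm). exists x, xs. auto.
      - apply (proj1 Hmu). exists l. auto. }
    pose proof (lpos l (HL l Hl) x Hx). assert (0 < l x * x) by nra.
    unfold Rdiv in Hr.
    apply (Rmult_le_compat_r (l x * x)) in Hr; [|lra].
    rewrite Rmult_assoc, Rinv_l in Hr by lra. lra.
Qed.

Lemma mu_ge0 (L : (R -> R) -> Prop) (HL : forall l, L l -> in_Lc l) mu
  (Hmu : mu1_class L mu) l (Hl : L l) : 0 <= mu.
Proof.
  destruct (mu_facts L HL mu Hmu) as [_ H].
  specialize (H l Hl 1 0 Rlt_0_1 (Rle_refl 0)).
  pose proof (lpos l (HL l Hl) 1 Rlt_0_1). nra.
Qed.

Lemma core (L : (R -> R) -> Prop) (HL : forall l, L l -> in_Lc l)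
  (la lb : R -> R) (Ha : L la) (Hb : L lb) mu (Hmu : mu1_class L mu)
  xsa xsb xa xb (Hs : is_flow xsa xsb) (H0 : is_flow xa xb)
  (Heq : la xa = lb xb) (Hlt : xsa < xa) (Hh : xa <= 1/2) :
  la xa * xa + lb xb * xb <= / (1 - mu / 2) * (la xsa * xsa + lb xsb * xsb).
Proof.
  destruct (mu_facts L HL mu Hmu) as [Hm1 Hf].
  pose proof (mu_ge0 L HL mu Hmu la Ha) as Hm0.
  destruct Hs as [Ha0 [Hb0 Hsum]]. destruct H0 as [Ha1 [Hb1 Hsum0]].
  assert (Hxa : 0 < xa) by lra.
  specialize (Hf la Ha xa xsa Hxa Ha0).
  pose proof (lpos la (HL la Ha) xa Hxa) as Lp.
  assert (Hxb: xb < xsb) by lra.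
  destruct (HL lb Hb) as [_ [Hmb _]].
  specialize (Hmb xb xsb Hb1 Hxb).
  set (Lv := la xa) in *.
  assert (Hkey : Lv * (1 - mu / 2) <= la xsa * xsa + lb xsb * xsb).
  { assert (Lv - lb xsb <= 0) by lra.
    assert ((Lv - lb xsb) * xsb <= 0) by nra.
    assert (0 <= mu * Lv) by nra.
    assert (0 <= (mu * Lv) * (1/2 - xa)) by (apply Rmult_le_pos; lra).
    assert (mu * (Lv * xa) <= mu * Lv / 2) by nra. nra. }
  assert (Hpos : 0 < 1 - mu / 2) by lra.
  rewrite Heq in *.
  apply (Rmult_le_reg_l (1 - mu/2)); auto.
  rewrite <- Rmult_assoc, Rinv_r by lra. nra.
Qed.

Theorem mainTheorem10
  (L : (R -> R) -> Prop) (HL : forall l, L l -> in_Lc l)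
  (l1 l2 : R -> R) (Hl1 : L l1) (Hl2 : L l2)
  (mu : R) (Hmu : mu1_class L mu)
  (xs1 xs2 : R) (Hopt : is_optimal l1 l2 xs1 xs2)
  (x01 x02 : R) (Hwe : is_wardrop l1 l2 x01 x02)
  (Hi : (xs1 < x01 /\ x01 <= 1/2) \/ (xs2 < x02 /\ x02 <= 1/2)) :
  cost l1 l2 x01 x02 <= / (1 - mu / 2) * cost l1 l2 xs1 xs2.
Proof.
  destruct Hopt as [Hs _]. destruct Hwe as [Hf [W1 W2]].
  pose proof Hs as Hs'. pose proof Hf as Hf'.
  destruct Hs' as [? [? ?]]. destruct Hf' as [? [? ?]].
  unfold cost.
  destruct Hi as [[Ha Hb]|[Ha Hb]].
  - assert (l1 x01 = l2 x02) by (apply Rle_antisym; [apply W1|apply W2]; lra).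
    exact (core L HL l1 l2 Hl1 Hl2 mu Hmu xs1 xs2 x01 x02 Hs Hf H5 Ha Hb).
  - assert (l2 x02 = l1 x01) by (apply Rle_antisym; [apply W2|apply W1]; lra).
    assert (Hs2 : is_flow xs2 xs1) by (repeat split; lra).
    assert (Hf2 : is_flow x02 x01) by (repeat split; lra).
    pose proof (core L HL l2 l1 Hl2 Hl1 mu Hmu xs2 xs1 x02 x01 Hs2 Hf2 H5 Ha Hb).
    lra.
Qed.
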